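(* Let $c$ be a prime of the form $2^r\cdot 3+1$ ($r\ge 1$), and let $a,b>1$ be integers with $a,b,c$ pairwise coprime and $e_c(b)=3$. Suppose positive integers $z,Y,Z$ with $z\le Z$ and $Y\equiv 4\pmod 6$ satisfy $a+b=c^z$ and $a+b^Y=c^Z$. Write $Y=1+3N$ ($N$ odd) and $e=\nu_c(N)$, and let $I(t)=\sum_{j=0}^{N-1}t^{3j}\in\mathbb Z[t]$. Then $e<z$ and there is a positive integer $K$ with $\gcd(K,c)=1$ such that \[ b^2+b+1=K\,c^{z-e},\qquad b(b-1)\,I(b)\,K=c^e(c^{Z-z}-1). \]
   Context: For a positive integer $M$ and an integer $A$ coprime to $M$, $e_M(A)$ denotes the least positive integer $e$ such that $A^e\equiv 1$ or $A^e\equiv -1\pmod M$. $\nu_c$ is the $c$-adic valuation. *)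

(* Defs.v *)
From mathcomp Require Import all_boot all_order all_algebra.
Set Implicit Arguments. Unset Strict Implicit. Unset Printing Implicit Defensive.
Import GRing.Theory.

Definition pm1_mod (M A e : nat) : bool :=
  (A ^ e %% M == 1 %% M) || ((A ^ e).+1 %% M == 0).

Definition e_ord (M A e : nat) : Prop :=
  [/\ 0 < e, pm1_mod M A e & forall k, 0 < k -> k < e -> ~~ pm1_mod M A k].

Definition Ipoly (N : nat) : {poly int} := (\sum_(j < N) 'X^(3 * j))%R.

(* Main.v *)
Require Import Defs.
From mathcomp Require Import all_boot all_order all_algebra.
From mathcomp Require Import ring zify.
Import GRing.Theory.
Set Implicit Arguments. Unset Strict Implicit. Unset Printing Implicit Defensive.

Definition S (x n : nat) := \sum_(j < n) x ^ j.

Lemma S_geom x n : 0 < x -> (x - 1) * S x n = x ^ n - 1.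
Proof.
move=> x0; elim: n => [|n IH]; first by rewrite /S big_ord0 muln0 expn0.
rewrite /S big_ord_recr /= -/(S x n) mulnDr IH expnS.
have : 0 < x ^ n by rewrite expn_gt0 x0.
move: (x ^ n) => X X0; nia.
Qed.

Lemma S_mul x m n : 1 < x -> S x (m * n) = S x m * S (x ^ m) n.
Proof.
move=> x1; apply/eqP; rewrite -(eqn_pmul2l (m := x - 1)); last by lia.
rewrite S_geom ?mulnA ?S_geom; try lia.
have h : 0 < x ^ m by rewrite expn_gt0; lia.
have := S_geom n h; rewrite -expnM => <-; by [].
Qed.

Lemma S_mod x n p : x %% p = 1 -> S x n %% p = n %% p.
Proof.
move=> xp; elim: n => [|n IH]; first by rewrite /S big_ord0.
rewrite /S big_ord_recr /= -/(S x n) -modnDm IH -modnXm xp exp1n modnDm addn1.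
by [].
Qed.
Lemma pow_mod q p j : (q * p + 1) ^ j %% p ^ 2 = (1 + j * q * p) %% p ^ 2.
Proof.
elim: j => [|j IH]; first by rewrite expn0 mul0n.
rewrite expnSr -modnMml IH modnMml.
have -> : (1 + j * q * p) * (q * p + 1) = (j * q * q) * p ^ 2 + (1 + j.+1 * q * p).
  rewrite expnS expn1; nia.
by rewrite modnMDl.
Qed.

Lemma S_p y p : prime p -> odd p -> y %% p = 1 -> logn p (S y p) = 1.
Proof.
move=> pp op yp.
have p1 := prime_gt1 pp.
have [q ey] : exists q, y = q * p + 1 by exists (y %/ p); rewrite {1}(divn_eq y p) yp.
have hs : S y p %% p ^ 2 = p.
  rewrite /S -modn_summ.
  rewrite ey; under eq_bigr => j _ do rewrite pow_mod.
  rewrite modn_summ.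
  have -> : \sum_(j < p) (1 + j * q * p) = p + q * p * 'C(p, 2).
    rewrite big_split /= sum1_card card_ord -bin2_sum big_mkord.
    idtac.
    congr (_ + _); rewrite big_distrr /=; apply: eq_bigr => j _; lia.
  have p2 : 0 < 2 < p.
    have : p != 2 by apply/eqP=> E; rewrite E in op.
    lia.
  have /dvdnP [t ->] := prime_dvd_bin pp p2.
  have -> : p + q * p * (t * p) = q * t * p ^ 2 + p by rewrite expnS expn1; lia.
  rewrite modnMDl modn_small // expnS expn1; nia.
have : S y p = p * (1 + p * (S y p %/ p ^ 2)).
  rewrite {1}(divn_eq (S y p) (p ^ 2)) hs expnS expn1; lia.
move=> ->.
rewrite lognM ?(prime_gt0 pp) //; rewrite (logn_prime _ pp) eqxx.
rewrite lognE.
have -> : p %| 1 + p * (S y p %/ p ^ 2) = false.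
  by rewrite dvdn_addl ?dvdn_mulr // dvdn1; apply/negbTE; lia.
by rewrite !andbF.
Qed.

Lemma S_gt0 x n : 0 < n -> 0 < S x n.
Proof. by case: n => // n _; rewrite /S big_ord_recl expn0 addn_gt0. Qed.

Lemma LTE x p N : prime p -> odd p -> x %% p = 1 -> 1 < x -> 0 < N ->
  logn p (S x N) = logn p N.
Proof.
move=> pp op xp x1.
elim: N {-2}N (leqnn N) => [|n IH] N hN N0; first lia.
have hd : (p %| S x N) = (p %| N) by rewrite /dvdn S_mod.
case: (boolP (p %| N)) => pN; last first.
  rewrite lognE [in RHS]lognE hd (negbTE pN) !andbF //.
have /dvdnP [M eM] := pN.
have p1 := prime_gt1 pp.
have M0 : 0 < M by move: N0; rewrite eM; nia.
have xM : x ^ M %% p = 1 by rewrite -modnXm xp exp1n modn_small.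
have h2 : logn p (S (x ^ M) p) = 1 by apply: S_p.
rewrite eM S_mul // lognM ?S_gt0 ?(prime_gt0 pp) // h2 IH; last by [].
  rewrite lognM ?(prime_gt0 pp) // (logn_prime _ pp) eqxx. done.
nia.
Qed.

Theorem mainTheorem9 (r c a b z Y Z N : nat) :
  1 <= r -> c = 2 ^ r * 3 + 1 -> prime c ->
  1 < a -> 1 < b ->
  coprime a b -> coprime b c -> coprime a c ->
  e_ord c b 3 ->
  0 < z -> 0 < Y -> 0 < Z -> z <= Z ->
  Y = 4 %[mod 6] ->
  a + b = c ^ z -> a + b ^ Y = c ^ Z ->
  Y = 1 + 3 * N ->
  let e := logn c N in
  e < z /\
  exists K : nat, 0 < K /\ coprime K c /\
    b ^ 2 + b + 1 = K * c ^ (z - e) /\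
    ((b%:Z * (b%:Z - 1) * (Ipoly N).[b%:Z] * K%:Z)
       = (c%:Z ^+ e * (c%:Z ^+ (Z - z) - 1)))%R.
Proof.
move=> hr hc pc a1 b1 cab cbc cac [_ pm3 nk] z0 Y0 Z0 zZ hY h1 h2 hYN e.
have r2 : 2 <= 2 ^ r by rewrite -{1}(expn1 2) leq_exp2l.
have c7 : 7 <= c by lia.
have c1 : 1 < c by lia.
have oc : odd c.
  have -> : c = (2 ^ r.-1 * 3) * 2 + 1.
    by rewrite hc -mulnA (mulnC 3) mulnA -expnSr prednK.
  by rewrite oddD oddM andbF.
have [k ek] : exists k, N = 2 * k + 1 by exists (N %/ 2); lia.
have N0 : 0 < N by lia.
set x := b ^ 3.
have x1 : 1 < x by rewrite /x !expnS expn0; nia.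
have bY : b ^ Y = b * x ^ N by rewrite hYN expnD expn1 expnM.
have ecZ : c ^ Z = c ^ z * c ^ (Z - z) by rewrite -expnD subnKC.
have cZz : 1 <= c ^ (Z - z) by rewrite expn_gt0; lia.
have Eq0 : b * (x ^ N - 1) = c ^ z * (c ^ (Z - z) - 1).
  rewrite mulnBr muln1 mulnBr muln1 -bY -ecZ; lia.
have ex1 : x - 1 = (b - 1) * (b ^ 2 + b + 1) by rewrite /x !expnS expn0; nia.
have Eq : b * (b - 1) * (b ^ 2 + b + 1) * S x N = c ^ z * (c ^ (Z - z) - 1).
  by rewrite -Eq0 -S_geom ?ex1 ?mulnA //; lia.
have cdv : c %| b * (x ^ N - 1).
  by rewrite Eq0 dvdn_mulr // -{1}(prednK z0) expnS dvdn_mulr.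
have cxN : c %| x ^ N - 1 by rewrite -(Gauss_dvdr _ (n:=b)) // coprime_sym.
have xN1 : x ^ N %% c = 1.
  have : x ^ N == 1 %[mod c] by rewrite eqn_mod_dvd // expn_gt0; lia.
  by move/eqP; rewrite (modn_small c1).
have xc : x %% c = 1.
  move: pm3; rewrite /pm1_mod (modn_small c1) => /orP [/eqP //|/eqP h].
  have xm : x %% c = c - 1.
    have hx : x.+1 = x %/ c * c + (x %% c).+1.
      by rewrite {1}(divn_eq x c) addnS.
    have : (x %% c).+1 <= c by rewrite ltn_mod prime_gt0.
    rewrite leq_eqVlt => /orP [/eqP E|L]; first by move: E; move: (x %% c) => t <-; rewrite subn1.
    by move: h; rewrite hx modnMDl (modn_small L).
  have x2 : x ^ 2 %% c = 1.
    rewrite -modnXm xm.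
    have -> : (c - 1) ^ 2 = (c - 2) * c + 1 by clear -c7; rewrite !expnS expn0; nia.
    by rewrite modnMDl modn_small.
  move: xN1; rewrite ek expnD expnM expn1 -modnMm -modnXm x2 exp1n xm.
  rewrite (modn_small c1) mul1n modn_small => [E|]; [clear -c7 E; lia|clear -c7; lia].
have cb : ~~ (c %| b - 1).
  apply/negP=> cd; move: (nk 1 isT isT); rewrite /pm1_mod expn1.
  have : b == 1 %[mod c] by rewrite eqn_mod_dvd // (ltnW b1).
  by move/eqP => ->; rewrite eqxx.
have cf : c %| b ^ 2 + b + 1.
  have : c %| x - 1 by rewrite -eqn_mod_dvd ?(ltnW x1) // xc modn_small.
  by rewrite ex1 Euclid_dvdM // (negbTE cb).
have bp : 0 < b by exact: ltnW b1.
have b1p : 0 < b - 1 by rewrite subn_gt0.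
have qp : 0 < b ^ 2 + b + 1 by rewrite addn1.
have Sp : 0 < S x N by exact: S_gt0.
have czp : 0 < c ^ z by rewrite expn_gt0 (ltnW c1).
have Lp : 0 < b * (b - 1) * (b ^ 2 + b + 1) * S x N by rewrite !muln_gt0 bp b1p qp Sp.
have Zz : 0 < Z - z.
  case E: (Z - z) => [|m] //.
  by rewrite Eq E expn0 subnn muln0 in Lp.
have cpos : 0 < c ^ (Z - z).-1 by rewrite expn_gt0 (ltnW c1).
have cZ2 : 0 < c ^ (Z - z) - 1.
  rewrite subn_gt0 -(prednK Zz) expnS.
  exact: leq_trans c1 (leq_pmulr _ cpos).
have cZ1 : logn c (c ^ (Z - z) - 1) = 0.
  rewrite lognE; case: (boolP (c %| _)) => h; last by rewrite !andbF.
  have : c %| c ^ (Z - z) - (c ^ (Z - z) - 1).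
    by apply: dvdn_sub => //; rewrite -(prednK Zz) expnS dvdn_mulr.
  have -> : c ^ (Z - z) - (c ^ (Z - z) - 1) = 1 by clear -cZz; lia.
  by rewrite dvdn1 => /eqP E; rewrite E in c1.
have lb : logn c b = 0 by apply: logn_coprime; rewrite coprime_sym.
have lb1 : logn c (b - 1) = 0 by rewrite lognE (negbTE cb) !andbF.
have lS : logn c (S x N) = e by apply: LTE.
have f1 : 0 < logn c (b ^ 2 + b + 1) by rewrite lognE pc cf qp.
have L1 : logn c (b * (b - 1) * (b ^ 2 + b + 1) * S x N) = logn c (b ^ 2 + b + 1) + e.
  by rewrite !lognM ?muln_gt0 ?bp ?b1p ?qp ?Sp // lb lb1 lS.
have L2 : logn c (c ^ z * (c ^ (Z - z) - 1)) = z.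
  by rewrite lognM // cZ1 pfactorK // addn0.
have hl : logn c (b ^ 2 + b + 1) + e = z by rewrite -L1 -L2 Eq.
set f := logn c (b ^ 2 + b + 1) in f1 hl.
split; first by clear -hl f1; lia.
have [K cK eK] := pfactor_coprime pc qp.
rewrite -/f in eK.
have K0 : 0 < K by move: eK; case: K {cK} => //; rewrite mul0n addn1.
exists K; split => //; split; first by rewrite coprime_sym.
have fz : f = z - e by clear -hl; lia.
rewrite -fz; split; first by [].
have cfpos : 0 < c ^ f by rewrite expn_gt0 (ltnW c1).
have En : b * (b - 1) * S x N * K = c ^ e * (c ^ (Z - z) - 1).
  apply/eqP; rewrite -(eqn_pmul2r cfpos); apply/eqP.
  have -> : b * (b - 1) * S x N * K * c ^ f = b * (b - 1) * (K * c ^ f) * S x N by ring.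
  by rewrite -eK Eq -hl expnD; ring.
have IS : ((Ipoly N).[b%:Z] = (S x N)%:Z)%R.
  rewrite /Ipoly horner_sum /S -[in RHS]natz natr_sum.
  apply: eq_bigr => j _.
  by rewrite hornerXn natrX /x natrX -exprM natz.
rewrite IS.
have H : ((b * (b - 1) * S x N * K)%:R : int)%R = (c ^ e * (c ^ (Z - z) - 1))%:R%R.
  by rewrite En.
rewrite !natrM !natrB ?natrX // in H.
rewrite !natz in H.
exact: H.
Qed.
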